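(* Let $\mathbb{K}\in\{\mathbb{R},\mathbb{C}\}$ and let $\mathcal{X}$ be a topological $\mathbb{K}$-vector space whose topological dual $\mathcal{X}^{\ast}$ separates the points of $\mathcal{X}$. Then $\mathbf{CF}(\mathcal{X}^{\ast})$, endowed with the (subspace topology of the) weak*-Hausdorff hypertopology, is a Hausdorff space.
   Context: Topological vector spaces are Hausdorff. $\mathcal{X}^{\ast}$ carries the weak* topology. $\mathbf{F}(\mathcal{X}^{\ast})$ is the set of nonempty weak*-closed subsets of $\mathcal{X}^{\ast}$ and $\mathbf{CF}(\mathcal{X}^{\ast})\subseteq\mathbf{F}(\mathcal{X}^{\ast})$ the subset of convex ones. The weak*-Hausdorff hypertopology on $\mathbf{F}(\mathcal{X}^{\ast})$ is the topology generated by the family of extended pseudometrics $d_H^{(A)}(F,\tilde F)=\max\{\sup_{\sigma\in F}\inf_{\tilde\sigma\in\tilde F}|(\sigma-\tilde\sigma)(A)|,\ \sup_{\tilde\sigma\in\tilde F}\inf_{\sigma\in F}|(\sigma-\tilde\sigma)(A)|\}\in[0,\infty]$, $A\in\mathcal{X}$. *)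

(* Defs.v *)
From HB Require Import structures.
From mathcomp Require Import all_boot all_order all_algebra.
From mathcomp Require Import all_classical all_reals all_analysis.
From mathcomp Require Export complex.
Set Implicit Arguments. Unset Strict Implicit. Unset Printing Implicit Defensive.
Import Order.TTheory GRing.Theory Num.Theory.
Import numFieldTopology.Exports numFieldNormedType.Exports.
Local Open Scope classical_set_scope.
Local Open Scope ring_scope.

Section HyperTopology.
(* R : the real numbers; K : the scalar field (R or C = R[i]);
   nK : the absolute value of K, valued in R. *)
Variables (R : realType) (K : numFieldType) (nK : K -> R).
Variable X : topologicalLmodType K.

Definition dual_elt (f : X -> K) : Prop :=
  (forall (a : K) (x y : X), f (a *: x + y) = a * f x + f y) /\ continuous f.

Definition dual_separates_points : Prop :=
  forall x y : X, x <> y -> exists f, dual_elt f /\ f x <> f y.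

Definition wstar_open (U : set (X -> K)) : Prop :=
  U `<=` dual_elt /\
  forall s, U s -> exists (xs : seq X) (e : R), 0 < e /\
    forall t, dual_elt t -> (forall x, x \in xs -> nK (t x - s x) < e) -> U t.

Definition wstar_closed (S : set (X -> K)) : Prop :=
  S `<=` dual_elt /\ wstar_open (dual_elt `\` S).

Definition Fset (S : set (X -> K)) : Prop := S !=set0 /\ wstar_closed S.

Definition convex_dual (S : set (X -> K)) : Prop :=
  forall s t, S s -> S t -> forall l : K, 0 <= l <= 1 ->
    S (fun x => l * s x + (1 - l) * t x).

Definition CFset (S : set (X -> K)) : Prop := Fset S /\ convex_dual S.

Definition dH (A : X) (F G : set (X -> K)) : \bar R :=
  Order.max
    (ereal_sup [set ereal_inf [set (nK (s A - t A))%:E | t in G] | s in F])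
    (ereal_sup [set ereal_inf [set (nK (s A - t A))%:E | s in F] | t in G]).

(* Open sets of the weak*-Hausdorff hypertopology on F(X^* ), i.e. the
   topology generated by the family (dH A)_{A in X}: every point has a
   finite intersection of dH-balls around it inside the set. *)
Definition hyp_open (U : set (set (X -> K))) : Prop :=
  U `<=` Fset /\
  forall F, U F -> exists (As : seq X) (e : R), 0 < e /\
    forall G, Fset G -> (forall A, A \in As -> (dH A F G < e%:E)%E) -> U G.

(* CF(X^* ) with the subspace topology of the hypertopology is Hausdorff:
   distinct points have relatively open neighbourhoods U :&: CF, V :&: CF
   which are disjoint. *)
Definition CF_hausdorff : Prop :=
  forall F G, CFset F -> CFset G -> F <> G ->
    exists U V, [/\ hyp_open U, hyp_open V, U F, V G &
      forall H, CFset H -> U H -> V H -> False].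

End HyperTopology.

(* Main.v *)
Require Import Defs.
From HB Require Import structures.
From mathcomp Require Import all_boot all_order all_algebra.
From mathcomp Require Import all_classical all_reals all_analysis.
From mathcomp Require Import complex.
From mathcomp Require Import lra ring.
Import Order.TTheory GRing.Theory Num.Theory.
Import numFieldTopology.Exports numFieldNormedType.Exports.
Local Open Scope ring_scope.

Section FinSep.
Local Open Scope classical_set_scope.
Set Implicit Arguments. Unset Strict Implicit.
Variables (R : realType) (m : nat).

Lemma sum_cont (s : seq 'I_m) (F : 'I_m -> 'rV[R]_m -> R) :
  (forall i, continuous (F i)) ->
  continuous (fun v => \sum_(i <- s) F i v).
Proof.
move=> Fc; elim: s => [|i s IH].
  by under eq_fun do rewrite big_nil; exact: cst_continuous.
under eq_fun do rewrite big_cons.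
by move=> v; apply: continuousD; [exact: Fc | exact: IH].
Qed.

Lemma sq_cont (a : R) (b : 'I_m -> R) :
  continuous (fun v : 'rV[R]_m => \sum_(i < m) (a * v ord0 i + b i)^+2).
Proof.
apply: sum_cont => i v.
have h : {for v, continuous (fun w : 'rV[R]_m => a * w ord0 i + b i)}.
  apply: continuousD; last exact: cst_continuous.
  apply: continuousM; first exact: cst_continuous.
  exact: coord_continuous.
under eq_fun do rewrite expr2.
exact: (continuousM h h).
Qed.

Lemma fge (v : 'rV[R]_m) i : (v ord0 i)^+2 <= \sum_(j < m) (v ord0 j)^+2.
Proof.
rewrite (bigD1 i) //= lerDl; apply: sumr_ge0 => j _; exact: sqr_ge0.
Qed.

Lemma fin_sep (C : set 'rV[R]_m) (e : R) : 0 < e ->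
  (forall c1 c2 (l : R), C c1 -> C c2 -> 0 <= l <= 1 ->
     C (l *: c1 + (1 - l) *: c2)) ->
  (forall c, C c -> exists i, e <= `|c ord0 i|) ->
  exists (r : 'I_m -> R) (d : R), 0 < d /\
    forall c, C c -> d <= \sum_(i < m) r i * c ord0 i.
Proof.
move=> e0 Cconv Cbox.
have [[c0 Cc0]|C0] := pselect (C !=set0); last first.
  exists (fun=> 0), 1; split => // c Cc; exfalso; apply: C0; by exists c.
pose f := fun v : 'rV[R]_m => \sum_(i < m) (v ord0 i)^+2.
have fc : continuous f.
  have -> : f = fun v => \sum_(i < m) (1 * v ord0 i + (fun=> 0) i)^+2.
    by apply: funext => v; apply: eq_bigr => i _; rewrite mul1r addr0.
  exact: sq_cont.
have f0 v : 0 <= f v by apply: sumr_ge0 => j _; exact: sqr_ge0.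
pose M := 1 + f c0.
pose Kset := closure C `&` [set v | f v <= f c0].
have Kcl : closed Kset.
  apply: closedI; first exact: closed_closure.
  apply: (@preimage_closed _ _ f [set x | x <= f c0]).
    by move=> x _; exact: fc.
  exact: closed_le.
have Kc : compact Kset.
  apply: (subclosed_compact Kcl
    (@rV_compact _ _ (fun=> `[(- M), M]%classic) (fun=> @segment_compact _ _ _))).
  move=> v [_ /= fv] i /=; rewrite in_itv /= -ler_norml.
  have h1 : `|v ord0 i| <= 1 + (v ord0 i)^+2.
    rewrite -real_normK ?num_real //.
    have := sqr_ge0 (`|v ord0 i| - 1); rewrite sqrrB mulr1 expr1n.
    set y := `|v ord0 i|; move=> h; nra.
  apply: (le_trans h1); rewrite /M lerD2l; exact: le_trans (fge v i) fv.
have K0 : Kset !=set0.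
  by exists c0; split => //; [exact: subset_closure|rewrite /= lexx].
have [p pK pmin] := EVT_min_rV K0 Kc (continuous_subspaceT (A := Kset) fc).
have claim1 x : C x -> f p <= f x.
  move=> Cx; case: (leP (f x) (f c0)) => h.
    by apply: pmin; rewrite inE; split => //; exact: subset_closure.
  apply/ltW/(le_lt_trans _ h); apply: pmin; rewrite inE; split => //=.
    exact: subset_closure.
move: pK; rewrite inE => -[pcl _].
have claim2 : e^+2 <= f p.
  rewrite leNgt; apply/negP => fpe.
  have : nbhs p (f @^-1` [set x | x < e^+2]).
    apply: open_nbhs_nbhs; split => //.
    by apply: open_comp; [move=> x _; exact: fc| exact: open_lt].
  move=> /pcl [x [Cx /= fx]].
  have [i hi] := Cbox x Cx.
  have : e^+2 <= f x.
    apply: le_trans (fge x i); rewrite -[x ord0 i ^+ 2]real_normK ?num_real //.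
    set y := `|x ord0 i|; move: hi; rewrite -/y => hi; nra.
  by rewrite leNgt fx.
have claim3 c : C c -> f p <= \sum_(i < m) p ord0 i * c ord0 i.
  move=> Cc; rewrite leNgt; apply/negP => hlt.
  set dt := \sum_(i < m) p ord0 i * c ord0 i in hlt.
  pose a := f p - dt.
  have a0 : 0 < a by rewrite subr_gt0.
  pose D := \sum_(i < m) (c ord0 i - p ord0 i)^+2.
  have D0 : 0 <= D by apply: sumr_ge0 => j _; exact: sqr_ge0.
  have aD0 : 0 < a + D by apply: ltr_wpDr.
  pose l := a / (a + D).
  have l0 : 0 < l by apply: divr_gt0.
  have l1 : l <= 1 by rewrite ler_pdivrMr // mul1r lerDl.
  have lD : l * (a + D) = a by rewrite /l divfK // gt_eqF.
  pose g := fun v : 'rV[R]_m =>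
    \sum_(i < m) ((1 - l) * v ord0 i + (fun i => l * c ord0 i) i)^+2.
  have gc : continuous g by exact: sq_cont.
  have gp : g p = f p - 2 * l * a + l^+2 * D.
    rewrite /g /a /f /dt /D.
    have h i : ((1 - l) * p ord0 i + (fun i => l * c ord0 i) i)^+2 =
      (p ord0 i)^+2 - 2 * l * ((p ord0 i)^+2 - p ord0 i * c ord0 i) +
      l^+2 * (c ord0 i - p ord0 i)^+2 by rewrite /=; ring.
    rewrite (eq_bigr _ (fun i _ => h i)) big_split /= sumrB -!mulr_sumr sumrB.
    by [].
  have gplt : g p < f p.
    have := congr1 (fun z => l * z) lD; rewrite /= gp => h; nra.
  have : nbhs p (g @^-1` [set x | x < f p]).
    apply: open_nbhs_nbhs; split => //.
    by apply: open_comp; [move=> x _; exact: gc| exact: open_lt].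
  move=> /pcl [x [Cx /= gx]].
  have Cy := Cconv c x l Cc Cx (introT andP (conj (ltW l0) l1)).
  have := claim1 _ Cy.
  have -> : f (l *: c + (1 - l) *: x) = g x.
    rewrite /f /g; apply: eq_bigr => i _; rewrite !mxE /=; congr (_ ^+ 2).
    by rewrite addrC.
  by rewrite leNgt gx.
exists (fun i => p ord0 i), (e^+2); split; first exact: exprn_gt0.
by move=> c Cc; exact: le_trans claim2 (claim3 c Cc).
Qed.
End FinSep.

Section Generic.
Local Open Scope classical_set_scope.
Set Implicit Arguments. Unset Strict Implicit.
Variables (R : realType) (K : numFieldType) (nK : K -> R).
Variables (re : K -> R) (emb : R -> K) (j : K).
Hypothesis reD : forall a b, re (a + b) = re a + re b.
Hypothesis reM : forall r z, re (emb r * z) = r * re z.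
Hypothesis re_le : forall z, re z <= nK z.
Hypothesis nK_le : forall z, nK z <= `|re z| + `|re (j * z)|.
Hypothesis nKN : forall z, nK (- z) = nK z.
Hypothesis emb01 : forall l, 0 <= l <= 1 -> 0 <= emb l <= 1.
Variable X : topologicalLmodType K.

Lemma re0 : re 0 = 0.
Proof. by have := reD 0 0; rewrite addr0 => h; lra. Qed.

Lemma reN a : re (- a) = - re a.
Proof. by apply/eqP; rewrite -addr_eq0 -reD addNr re0. Qed.

Lemma reB a b : re (a - b) = re a - re b.
Proof. by rewrite reD reN. Qed.

Lemma re_sum n (F : 'I_n -> K) : re (\sum_(i < n) F i) = \sum_(i < n) re (F i).
Proof.
apply: (big_ind2 (fun a b => re a = b)) => //; first exact: re0.
by move=> a b c d <- <-; rewrite reD.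
Qed.

Section dual.
Variable t : X -> K.
Hypothesis td : dual_elt t.

Lemma dual0 : t 0 = 0.
Proof.
have := td.1 1 0 0; rewrite scaler0 addr0 mul1r => h.
by have := congr1 (fun z => z - t 0) h; rewrite /= subrr addrK => /esym.
Qed.

Lemma dualZ a x : t (a *: x) = a * t x.
Proof. by have := td.1 a x 0; rewrite addr0 dual0 addr0. Qed.

Lemma dualD x y : t (x + y) = t x + t y.
Proof. by have := td.1 1 x y; rewrite scale1r mul1r. Qed.

Lemma dual_sum n (c : 'I_n -> K) (y : 'I_n -> X) :
  t (\sum_(i < n) c i *: y i) = \sum_(i < n) c i * t (y i).
Proof.
apply: (big_ind2 (fun a b => t a = b)) => //; first exact: dual0.
  by move=> a b c' d <- <-; rewrite dualD.
by move=> i _; rewrite dualZ.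
Qed.
End dual.


Lemma sep_point (G : set (X -> K)) (s : X -> K) :
  wstar_closed nK G -> convex_dual G -> dual_elt s -> ~ G s ->
  exists (A : X) (d : R), 0 < d /\ forall t, G t -> re (s A) + d <= re (t A).
Proof.
move=> [Gd [_ Gop]] Gconv sd nGs.
have [xs [e [e0 He]]] := Gop s (conj sd nGs).
pose ys := xs ++ map (fun x => j *: x) xs.
pose mm := size ys.
pose T := fun t : X -> K =>
  \row_(i < mm) re (t (nth 0 ys i) - s (nth 0 ys i)).
have e20 : 0 < e / 2 by apply: divr_gt0.
have Cconv : forall c1 c2 (l : R), (T @` G) c1 -> (T @` G) c2 -> 0 <= l <= 1 ->
     (T @` G) (l *: c1 + (1 - l) *: c2).
  move=> _ _ l [t1 Gt1 <-] [t2 Gt2 <-] hl.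
  exists (fun x => emb l * t1 x + (1 - emb l) * t2 x).
    exact: (Gconv _ _ Gt1 Gt2 _ (emb01 hl)).
  apply/rowP => i; rewrite !mxE.
  set y := nth 0 ys i.
  rewrite (_ : emb l * t1 y + (1 - emb l) * t2 y - s y = emb l * (t1 y - s y)
     + ((t2 y - s y) - emb l * (t2 y - s y))); last by ring.
  by rewrite [LHS]reD [in LHS]reB !reM; ring.
have Cbox : forall c, (T @` G) c -> exists i, e / 2 <= `|c ord0 i|.
  move=> _ [t Gt <-].
  case: (pselect (exists i, e / 2 <= `|T t ord0 i|)) => // hn; exfalso.
  have hall : forall i, `|T t ord0 i| < e / 2.
    by move=> i; rewrite ltNge; apply/negP => h; apply: hn; exists i.
  suff hx : forall x, x \in xs -> nK (t x - s x) < e.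
    by have [_] := He t (Gd _ Gt) hx.
  move=> x xin.
  have i1 : (index x ys < mm)%N by rewrite /mm index_mem mem_cat xin.
  have := hall (Ordinal i1); rewrite mxE /= nth_index ?mem_cat ?xin //.
  have i2 : (size xs + index x xs < mm)%N.
    by rewrite /mm size_cat size_map ltn_add2l index_mem.
  have := hall (Ordinal i2); rewrite mxE /= nth_cat ltnNge leq_addr /= addKn.
  rewrite (nth_map 0) ?index_mem // nth_index //.
  rewrite (dualZ (Gd _ Gt)) (dualZ sd) -mulrBr => h2 h1.
  apply: le_lt_trans (nK_le _) _.
  by have := ltrD h1 h2; rewrite -splitr.
have [r [d [d0 Hd]]] := fin_sep e20 Cconv Cbox.
pose A := \sum_(i < mm) emb (r i) *: nth 0 ys i.
exists A, d; split => // t Gt.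
have := Hd (T t) (imageP _ Gt).
under eq_bigr do rewrite mxE.
have -> : \sum_(i < mm) r i * re (t (nth 0 ys i) - s (nth 0 ys i)) =
   re (t A) - re (s A).
  rewrite /A (dual_sum (Gd _ Gt)) (dual_sum sd) -reB -sumrB re_sum.
  by apply: eq_bigr => i _; rewrite -mulrBr reM.
move=> h; lra.
Qed.


Lemma sep_sets (F G : set (X -> K)) (s : X -> K) :
  Fset nK F -> Fset nK G -> convex_dual G -> F s -> ~ G s ->
  exists U V, [/\ hyp_open nK U, hyp_open nK V, U F, V G &
      forall H, U H -> V H -> False].
Proof.
move=> FF FG Gconv Fs nGs.
have sd : dual_elt s := FF.2.1 s Fs.
have [A [d [d0 Hd]]] := sep_point FG.2 Gconv sd nGs.
pose mid := re (s A) + d / 2.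
exists (fun H => Fset nK H /\ exists h, H h /\ re (h A) < mid).
exists (fun H => Fset nK H /\ exists c, mid < c /\ forall h, H h -> c <= re (h A)).
split.
- split; first by move=> H [].
  move=> H [FH [h [Hh hlt]]].
  exists [:: A], (mid - re (h A)); split; first by rewrite subr_gt0.
  move=> H' FH' hd; split => //.
  have := hd A (mem_head _ _); rewrite /dH gt_max => /andP[h1 _].
  have : (ereal_inf [set (nK (h A - t A))%:E | t in H'] < (mid - re (h A))%:E)%E.
    by apply: le_lt_trans h1; apply: ereal_sup_ubound; exists h.
  move=> /ereal_inf_lt [_ [h' H'h' <-]]; rewrite lte_fin => hn.
  exists h'; split => //.
  have := re_le (h' A - h A); rewrite reB -nKN opprB => h2; lra.
- split; first by move=> H [].
  move=> H [FH [c [cm Hc]]].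
  exists [:: A], ((c - mid) / 2); split.
    by apply: divr_gt0 => //; rewrite subr_gt0.
  move=> H' FH' hd; split => //.
  have := hd A (mem_head _ _); rewrite /dH gt_max => /andP[_ h1].
  exists (c - (c - mid) / 2); split; first lra.
  move=> h' H'h'.
  have : (ereal_inf [set (nK (s0 A - h' A))%:E | s0 in H] < ((c - mid) / 2)%:E)%E.
    by apply: le_lt_trans h1; apply: ereal_sup_ubound; exists h'.
  move=> /ereal_inf_lt [_ [h Hh <-]]; rewrite lte_fin => hn.
  have := re_le (h A - h' A); rewrite reB => h2.
  have := Hc h Hh; lra.
- split => //; exists s; split => //; rewrite /mid; lra.
- split => //; exists (re (s A) + d); split; first (rewrite /mid; lra).
  by move=> h Gh; exact: Hd.
- by move=> H [_ [h [Hh hlt]]] [_ [c [cm Hc]]]; have := Hc h Hh; lra.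
Qed.

Lemma CF_gen : CF_hausdorff nK X.
Proof.
move=> F G [FF Fc] [FG Gc] FneG.
have [s hs] : exists s, (F s /\ ~ G s) \/ (G s /\ ~ F s).
  case: (pselect (exists s, (F s /\ ~ G s) \/ (G s /\ ~ F s))) => // hn.
  exfalso; apply: FneG; apply/funext => x; apply/propext; split => hx.
    by case: (pselect (G x)) => // nG; exfalso; apply: hn; exists x; left.
  by case: (pselect (F x)) => // nF; exfalso; apply: hn; exists x; right.
case: hs => [[Fs nGs]|[Gs nFs]].
  have [U [V [hU hV UF VG dj]]] := sep_sets FF FG Gc Fs nGs.
  by exists U, V; split => // H _; exact: dj.
have [U [V [hU hV UG VF dj]]] := sep_sets FG FF Fc Gs nFs.
by exists V, U; split => // H _ VH UH; exact: dj H UH VH.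
Qed.

End Generic.

Theorem corollary3p11 (R : realType) :
  (forall X : topologicalLmodType R,
     hausdorff_space X -> dual_separates_points X ->
     CF_hausdorff (fun z : R => `|z|) X) /\
  (forall X : topologicalLmodType R[i],
     hausdorff_space X -> dual_separates_points X ->
     CF_hausdorff (fun z : R[i] => complex.Re `|z|) X).
Proof.
split => X _ _.
  apply: (@CF_gen R R (fun z : R => `|z|) id id 0) => //.
  - by move=> z; exact: ler_norm.
  - by move=> z; rewrite /= mul0r normr0 addr0.
  - by move=> z; rewrite normrN.
apply: (@CF_gen R R[i] (fun z : R[i] => complex.Re `|z|) (@complex.Re R)
   (fun r => (r%:C)%C) 'i%C).
- by case=> a b [c d].
- by move=> r [a b]; rewrite /= mul0r subr0.
- case=> a b; rewrite normc_def /=.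
  apply: le_trans (ler_norm a) _.
  rewrite -sqrtr_sqr; apply: ler_wsqrtr; rewrite lerDl; exact: sqr_ge0.
- case=> a b; rewrite normc_def /= mul0r mul1r sub0r normrN.
  rewrite -[X in _ <= X]ger0_norm ?addr_ge0 // -sqrtr_sqr.
  apply: ler_wsqrtr; rewrite -[a ^+ 2]real_normK ?num_real //.
  rewrite -[b ^+ 2]real_normK ?num_real //.
  have := normr_ge0 a; have := normr_ge0 b; nra.
- by move=> z; rewrite normrN.
- move=> l /andP[l0 l1]; apply/andP; split; first by rewrite ler0c.
  by rewrite (_ : 1 = (1%:C)%C) // lecR.
Qed.
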